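(* Let $\mathcal X$ be a nonempty set, $n,m,d$ positive integers, and for $i=1,\dots,n$ let $\omega_i>0$, let $\mathbf C_i\in\mathbb H^{d\times d}_{++}$, and let $\mathbf A^{1/2}_i:\mathcal X\to\mathbb C^{m\times d}$ and $\mathbf B_i:\mathcal X\to\mathbb H^{m\times m}_{++}$ be arbitrary functions. Define the matrix ratio $\mathbf M_i(x)=(\mathbf A^{1/2}_i(x))^{H}\mathbf B_i(x)^{-1}\mathbf A^{1/2}_i(x)\in\mathbb C^{d\times d}$ and, for $x\in\mathcal X$ and $\mathbf Y_1,\dots,\mathbf Y_n\in\mathbb C^{m\times d}$, $$f_q(x,\mathbf Y_1,\dots,\mathbf Y_n)=\sum_{i=1}^n\omega_i\,\mathrm{tr}\Big(2\Re\{(\mathbf A^{1/2}_i(x))^{H}\mathbf Y_i\mathbf C_i\}-\mathbf Y_i^{H}\mathbf B_i(x)\mathbf Y_i\mathbf C_i\Big).$$ Then for every fixed $x\in\mathcal X$, $\max_{\mathbf Y_1,\dots,\mathbf Y_n\in\mathbb C^{m\times d}} f_q(x,\mathbf Y_1,\dots,\mathbf Y_n)=\sum_{i=1}^n\omega_i\,\mathrm{tr}(\mathbf C_i\mathbf M_i(x))$, the maximum being attained uniquely at $\mathbf Y_i=\mathbf B_i(x)^{-1}\mathbf A^{1/2}_i(x)$, $i=1,\dots,n$. Consequently, the problem $\max_{x\in\mathcal X}\sum_{i=1}^n\omega_i\mathrm{tr}(\mathbf C_i\mathbf M_i(x))$ is equivalent to $\max_{x\in\mathcal X,\ \mathbf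 Y_i\in\mathbb C^{m\times d}} f_q(x,\mathbf Y_1,\dots,\mathbf Y_n)$: both have the same optimal value, and $x^\star$ is optimal for the former if and only if $(x^\star,\mathbf B_1(x^\star)^{-1}\mathbf A^{1/2}_1(x^\star),\dots,\mathbf B_n(x^\star)^{-1}\mathbf A^{1/2}_n(x^\star))$ is optimal for the latter.
   Context: $\mathbb H^{k\times k}_{++}$ denotes the set of $k\times k$ Hermitian positive definite matrices; $(\cdot)^H$ is conjugate transpose; $\Re$ is the real part applied entrywise (so $\mathrm{tr}(2\Re\{\mathbf A\})=2\Re\,\mathrm{tr}(\mathbf A)$). *)

(* Defs.v *)
From HB Require Import structures.
From mathcomp Require Import all_boot all_order all_algebra.
From mathcomp Require Import reals.
From mathcomp Require Export complex.
Set Implicit Arguments. Unset Strict Implicit. Unset Printing Implicit Defensive.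
Import Order.TTheory GRing.Theory Num.Theory.
Local Open Scope ring_scope.

Definition ctrmx (F : numClosedFieldType) (p q : nat) (A : 'M[F]_(p, q)) : 'M[F]_(q, p) :=
  map_mx Num.conj A^T.

Definition remx (F : numClosedFieldType) (p q : nat) (A : 'M[F]_(p, q)) : 'M[F]_(p, q) :=
  map_mx (fun z => 'Re z) A.

Definition hpd (F : numClosedFieldType) (k : nat) (A : 'M[F]_k) : Prop :=
  ctrmx A = A /\ (forall v : 'cV[F]_k, v != 0 -> 0 < (ctrmx v *m A *m v) ord0 ord0).

Definition mratio (F : numClosedFieldType) (m d : nat)
  (Ah : 'M[F]_(m, d)) (B : 'M[F]_m) : 'M[F]_d :=
  ctrmx Ah *m invmx B *m Ah.

Definition fq (F : numClosedFieldType) (X : Type) (n m d : nat)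
  (w : 'I_n -> F) (Cm : 'I_n -> 'M[F]_d)
  (Ah : 'I_n -> X -> 'M[F]_(m, d)) (B : 'I_n -> X -> 'M[F]_m)
  (x : X) (Y : 'I_n -> 'M[F]_(m, d)) : F :=
  \sum_(i < n) w i * \tr (2%:R *: remx (ctrmx (Ah i x) *m Y i *m Cm i)
                           - ctrmx (Y i) *m B i x *m Y i *m Cm i).

Definition fobj (F : numClosedFieldType) (X : Type) (n m d : nat)
  (w : 'I_n -> F) (Cm : 'I_n -> 'M[F]_d)
  (Ah : 'I_n -> X -> 'M[F]_(m, d)) (B : 'I_n -> X -> 'M[F]_m) (x : X) : F :=
  \sum_(i < n) w i * \tr (Cm i *m mratio (Ah i x) (B i x)).

Definition Yopt (F : numClosedFieldType) (X : Type) (n m d : nat)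
  (Ah : 'I_n -> X -> 'M[F]_(m, d)) (B : 'I_n -> X -> 'M[F]_m) (x : X) (i : 'I_n)
  : 'M[F]_(m, d) := invmx (B i x) *m Ah i x.

(* Main.v *)
Require Import Defs.
From HB Require Import structures.
From mathcomp Require Import all_boot all_order all_algebra.
From mathcomp Require Import reals complex.
From mathcomp Require Import sesquilinear spectral.
From mathcomp Require Import ring.
From Stdlib Require FunctionalExtensionality.
Import Order.TTheory GRing.Theory Num.Theory.
Local Open Scope ring_scope.
Set Implicit Arguments. Unset Strict Implicit. Unset Printing Implicit Defensive.

Section Aux.
Variable F : numClosedFieldType.

Lemma ctrmxM p q r (A : 'M[F]_(p,q)) (B : 'M[F]_(q,r)) :
  ctrmx (A *m B) = ctrmx B *m ctrmx A.
Proof. by rewrite /ctrmx trmx_mul map_mxM. Qed.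

Lemma ctrmxK p q (A : 'M[F]_(p,q)) : ctrmx (ctrmx A) = A.
Proof.
by apply/matrixP=> i j; rewrite /ctrmx !mxE conjCK.
Qed.

Lemma ctrmxD p q (A B : 'M[F]_(p,q)) : ctrmx (A + B) = ctrmx A + ctrmx B.
Proof. by apply/matrixP=> i j; rewrite /ctrmx !mxE rmorphD. Qed.

Lemma ctrmxN p q (A : 'M[F]_(p,q)) : ctrmx (- A) = - ctrmx A.
Proof. by apply/matrixP=> i j; rewrite /ctrmx !mxE rmorphN. Qed.

Lemma ctrmxB p q (A B : 'M[F]_(p,q)) : ctrmx (A - B) = ctrmx A - ctrmx B.
Proof. by rewrite ctrmxD ctrmxN. Qed.

Lemma ctrmx0 p q : ctrmx (0 : 'M[F]_(p,q)) = 0.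
Proof. by apply/matrixP=> i j; rewrite /ctrmx !mxE rmorph0. Qed.

Lemma tr_ctrmx p (A : 'M[F]_p) : \tr (ctrmx A) = Num.conj (\tr A).
Proof.
rewrite /mxtrace rmorph_sum; apply: eq_bigr => i _; by rewrite /ctrmx !mxE.
Qed.

Lemma tr_remx p (A : 'M[F]_p) : \tr (remx A) = (\tr A + Num.conj (\tr A)) / 2.
Proof.
rewrite /mxtrace rmorph_sum -big_split /= mulr_suml; apply: eq_bigr => i _.
by rewrite /remx !mxE ReE.
Qed.

Lemma hpd_unit k (B : 'M[F]_k) : hpd B -> B \in unitmx.
Proof.
move=> [Bh Bp]; rewrite unitmxE unitfE; apply/negP => /det0P [v v0 vB].
have nz : ctrmx v != 0.
  apply: contra v0 => /eqP h; apply/eqP.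
  by rewrite -[v]ctrmxK h ctrmx0.
have := Bp _ nz; suff -> : ctrmx (ctrmx v) *m B *m ctrmx v = 0 by rewrite mxE ltxx.
by rewrite ctrmxK vB mul0mx.
Qed.

Lemma ctrmx_inv k (B : 'M[F]_k) : ctrmx B = B -> ctrmx (invmx B) = invmx B.
Proof.
move=> Bh; rewrite /ctrmx trmx_inv.
have -> : map_mx Num.conj (invmx B^T) = invmx (map_mx Num.conj B^T).
  by rewrite map_invmx.
by rewrite -/(ctrmx B) Bh.
Qed.

Lemma key_identity m d (A Y : 'M[F]_(m,d)) (B : 'M[F]_m) (C : 'M[F]_d) :
  hpd B -> hpd C ->
  \tr (2%:R *: remx (ctrmx A *m Y *m C) - ctrmx Y *m B *m Y *m C) =
  \tr (C *m mratio A B) -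
  \tr (ctrmx (Y - invmx B *m A) *m B *m (Y - invmx B *m A) *m C).
Proof.
move=> hB [Ch _]; have Bu := hpd_unit hB; case: hB => Bh _.
have E : ctrmx (Y - invmx B *m A) *m B *m (Y - invmx B *m A) =
   ctrmx Y *m B *m Y - ctrmx Y *m A - ctrmx A *m Y + mratio A B.
  rewrite ctrmxB ctrmxM ctrmx_inv // /mratio.
  rewrite !mulmxBl !mulmxBr -!mulmxA !mulKVmx // !mulmxA.
  by rewrite -[ctrmx A *m invmx B *m B]mulmxA mulVmx // mulmx1 opprD opprK addrA.
rewrite E !mulmxDl !mulNmx !linearD !linearN /= linearZ /= tr_remx.

have h1 : Num.conj (\tr (ctrmx A *m Y *m C)) = \tr (ctrmx Y *m A *m C).
  by rewrite -tr_ctrmx !ctrmxM ctrmxK Ch mxtrace_mulC.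
have h2 : \tr (C *m mratio A B) = \tr (mratio A B *m C) by rewrite mxtrace_mulC.
rewrite h1 h2.
have n2 : (2%:R : F) != 0 by rewrite pnatr_eq0.
by field.
Qed.

Lemma entry3 p q r t (X : 'M[F]_(p,q)) (S : 'M[F]_(q,r)) (W : 'M[F]_(r,t)) k l :
  (X *m S *m W) k l = (row k X *m S *m col l W) 0 0.
Proof.
rewrite !mxE; apply: eq_bigr => j _; rewrite !mxE; congr (_ * _).
by apply: eq_bigr => h _; rewrite !mxE.
Qed.

Lemma mul_col p q r (Z : 'M[F]_(p,q)) (Q : 'M[F]_(q,r)) i j :
  (Z *m Q) i j = (Z *m col j Q) i 0.
Proof. by rewrite !mxE; apply: eq_bigr => h _; rewrite !mxE. Qed.

Lemma row_ctrmx p q (P : 'M[F]_(p,q)) k : row k P = ctrmx (col k (ctrmx P)).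
Proof. by apply/matrixP => i j; rewrite /ctrmx !mxE conjCK. Qed.

Lemma qform_ge0 k (B : 'M[F]_k) (v : 'cV[F]_k) : hpd B ->
  0 <= (ctrmx v *m B *m v) 0 0 /\ ((ctrmx v *m B *m v) 0 0 = 0 -> v = 0).
Proof.
move=> [_ Bp]; have [->|nz] := eqVneq v 0.
  by rewrite mulmx0 mxE.
have h := Bp _ nz; split; first exact: ltW.
by move=> e; move: h; rewrite e ltxx.
Qed.

Lemma trace_pos m d (Z : 'M[F]_(m,d)) (B : 'M[F]_m) (C : 'M[F]_d) :
  hpd B -> hpd C ->
  0 <= \tr (ctrmx Z *m B *m Z *m C) /\
  (\tr (ctrmx Z *m B *m Z *m C) = 0 -> Z = 0).
Proof.
move=> hB hC; have [Ch Cp] := hC.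
have CC : (C ^t* )%sesqui = C := Ch.
have Cn : C \is normalmx by apply/normalmxP; rewrite CC.
move/orthomx_spectralP: Cn.
set P := spectralmx C; set s := spectral_diag C => CE.
have PU : P \is unitarymx := spectral_unitarymx C.
have Pu : P \in unitmx := spectral_unit C.
set Q := ctrmx P.
have QE : invmx P = Q := invmx_unitary PU.
have PQ : P *m Q = 1%:M by apply/unitarymxP.
have QP : Q *m P = 1%:M by rewrite -QE mulVmx.
rewrite QE in CE.
set S := ctrmx Z *m B *m Z.
have trE : \tr (S *m C) = \sum_k (P *m S *m Q) k k * s 0 k.
  rewrite CE !mulmxA mxtrace_mulC !mulmxA mul_mx_diag /mxtrace.
  by apply: eq_bigr => k _; rewrite mxE.
have sE : forall k, s 0 k = (ctrmx (col k Q) *m C *m col k Q) 0 0.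
  move=> k; rewrite -row_ctrmx -entry3.
  have -> : P *m C *m Q = diag_mx s.
    by rewrite CE !mulmxA PQ mul1mx -mulmxA PQ mulmx1.
  by rewrite mxE eqxx mulr1n.
have MkE : forall k, (P *m S *m Q) k k =
    (ctrmx (Z *m col k Q) *m B *m (Z *m col k Q)) 0 0.
  by move=> k; rewrite entry3 row_ctrmx /S ctrmxM !mulmxA.
have spos : forall k, 0 < s 0 k.
  move=> k; rewrite sE; apply: Cp.
  apply/negP => /eqP c0.
  have := PQ; move/matrixP/(_ k k); rewrite -[P]mulmx1 entry3 c0.
  by rewrite mulmx0 !mxE eqxx mulr1n => /eqP; rewrite eq_sym oner_eq0.
have tge0 : forall k, 0 <= (P *m S *m Q) k k * s 0 k.
  by move=> k; rewrite MkE; apply: mulr_ge0; [exact: (qform_ge0 _ hB).1 | exact: ltW].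
split; first by rewrite trE sumr_ge0.
rewrite trE => /psumr_eq0P => h; have {h} := h (fun k _ => tge0 k) => h.
have ZQ : Z *m Q = 0.
  apply/matrixP => i j; rewrite mul_col.
  have := h j isT; move/eqP; rewrite mulf_eq0 (gt_eqF (spos j)) orbF MkE.
  by move/eqP/(qform_ge0 _ hB).2 => ->; rewrite !mxE.
by rewrite -[Z]mulmx1 -QP mulmxA ZQ mul0mx.
Qed.
End Aux.

Theorem proposition2 (R : realType) (X : Type) (n m d : nat)
  (w : 'I_n -> R) (Cm : 'I_n -> 'M[R[i]]_d)
  (Ah : 'I_n -> X -> 'M[R[i]]_(m, d)) (B : 'I_n -> X -> 'M[R[i]]_m) :
  inhabited X -> (0 < n)%N -> (0 < m)%N -> (0 < d)%N ->
  (forall i, 0 < w i) ->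
  (forall i, hpd (Cm i)) ->
  (forall i x, hpd (B i x)) ->
  let wC := fun i => ((w i)%:C)%C in
  let f := fq wC Cm Ah B in
  let g := fobj wC Cm Ah B in
  (* inner maximization: value g x, attained exactly at Yopt *)
  (forall x : X,
     (forall Y : 'I_n -> 'M[R[i]]_(m, d), f x Y <= g x) /\
     (forall Y : 'I_n -> 'M[R[i]]_(m, d),
        f x Y = g x <-> (forall i, Y i = Yopt Ah B x i))) /\
  (* equivalence of the two outer problems: same upper bounds (same supremum) *)
  (forall v : R[i],
     (forall x, g x <= v) <-> (forall x Y, f x Y <= v)) /\
  (* same attained optimal value *)
  (forall v : R[i],
     (exists xs, g xs = v /\ forall x, g x <= v) <->
     (exists xs Ys, f xs Ys = v /\ forall x Y, f x Y <= v)) /\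
  (* optimal solutions correspond *)
  (forall xs : X,
     (forall x, g x <= g xs) <->
     (forall x Y, f x Y <= f xs (Yopt Ah B xs))).
Proof.
move=> _ _ _ _ wp Cp Bp wC f g.
pose T x (Y : 'I_n -> 'M[R[i]]_(m, d)) i :=
  \tr (ctrmx (Y i - Yopt Ah B x i) *m B i x *m (Y i - Yopt Ah B x i) *m Cm i).
have fE : forall x Y, f x Y = g x - \sum_i wC i * T x Y i.
  move=> x Y; rewrite /f /g /fq /fobj -sumrB; apply: eq_bigr => i _.
  by rewrite key_identity // mulrBr.
have wCp : forall i, 0 < wC i.
  by move=> i; rewrite /wC -[0]/((0:R)%:C)%C ltcR.
have Tge0 : forall x Y i, 0 <= wC i * T x Y i.
  by move=> x Y i; apply: mulr_ge0; [exact: ltW | exact: (trace_pos _ (Bp i x) (Cp i)).1].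
have inner1 : forall x Y, f x Y <= g x.
  by move=> x Y; rewrite fE gerBl sumr_ge0.
have fopt : forall x, f x (Yopt Ah B x) = g x.
  move=> x; rewrite fE big1 ?subr0 // => i _.
  by rewrite /T subrr !mulmx0 mul0mx linear0 mulr0.
have inner2 : forall x Y, f x Y = g x <-> (forall i, Y i = Yopt Ah B x i).
  move=> x Y; split; last first.
    move=> e; have -> : Y = Yopt Ah B x by apply: FunctionalExtensionality.functional_extensionality.
    exact: fopt.
  rewrite fE => /eqP; rewrite -subr_eq0 addrAC subrr add0r oppr_eq0 => /eqP.
  move=> /psumr_eq0P h i; have {h} := h (fun k _ => Tge0 x Y k) i isT.
  move/eqP; rewrite mulf_eq0 (gt_eqF (wCp i)) /= => /eqP.
  by move/(trace_pos _ (Bp i x) (Cp i)).2 => /subr0_eq.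
split; first by move=> x; split; [exact: inner1 | exact: inner2].
split.
  move=> v; split.
    by move=> h x Y; apply: le_trans (h x); exact: inner1.
  by move=> h x; rewrite -fopt; exact: h.
split.
  move=> v; split.
    move=> [xs [gv h]]; exists xs, (Yopt Ah B xs); rewrite fopt; split => //.
    by move=> x Y; apply: le_trans (h x); exact: inner1.
  move=> [xs [Ys [fv h]]]; exists xs; split.
    apply/le_anti; rewrite -{1}fopt h /= -fv inner1 //.
  by move=> x; rewrite -fopt; exact: h.
move=> xs; rewrite fopt; split.
  by move=> h x Y; apply: le_trans (h x); exact: inner1.
by move=> h x; rewrite -fopt; exact: h.
Qed.
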